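(* Assume (in $V$) $\mathfrak b=\aleph_1$ with the family $\{g_\alpha:\alpha<\omega_1\}$ fixed as below. Let $X\subseteq{}^\omega 2$, $X\in V$, with $|X|\ge\aleph_1$, let $G=\langle X\rangle$ be the subgroup generated by $X$, and let $\bar{\mathcal T}\in V$ be a $G$-matrix with $\mathcal T=\bigcup_\alpha\mathcal T_\alpha$. Let $\dot z$ be a Cohen-forcing ($\mathbb C$-)name such that the trivial condition forces $\dot z\in{}^\omega 2\setminus V$. Then there is $x\in X$ such that the trivial condition forces $\dot z\notin x+[T]$ for all $T\in\mathcal T$.
   Context: ${}^\omega 2$ is the Cantor space with bitwise addition modulo $2$. $\mathbb S$ is the set of perfect subtrees of ${}^{<\omega}2$ ordered by inclusion; $[T]$ is the set of branches of $T$ (evaluated in the extension); for $x\in{}^\omega 2$, $x+T=\{\sigma+x\restriction|\sigma|:\sigma\in T\}$. A node $\sigma\in T$ is splitting if $\sigma^\frown0,\sigma^\frown1\in T$; $T$ is skew if for each $n$ there is at most one splitting node of length $n$. The splitting predecessors of $s\in T$ are the splitting nodes of $T$ properly contained in $s$; $h_T(n)=\min\{k:\text{some node of }T\text{ of length }k\text{ has }n\text{ splitting predecessors}\}$. $g\le^* f$ means $g(n)\le f(n)$ for almost all $n$. $\{g_\alpha:\alpha<\omega_1\}\subseteq{}^\omega\omega$ satisfies $\alpha<\beta\Rightarrow g_\alpha\le^* g_\beta$ and for every $f\in{}^\omega\omega$ there is $\alpha$ with $g_\alpha\not\le^* f$. $S$ is somewhere dense in $T$ if there is $s\in T$ with $T_s=\{t\in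 T:t\subseteq s\lor s\subseteq t\}\subseteq S$. A $G$-matrix is a sequence $\langle\mathcal T_\alpha:\alpha<\omega_1\rangle$ with $\mathcal T=\bigcup_\alpha\mathcal T_\alpha$ such that: (i) $\mathcal T\subseteq\mathbb S$ consists of skew trees; (ii) $g_\alpha\le^* h_T$ for all $T\in\mathcal T_\alpha$; (iii) for all $S\neq T$ in $\mathcal T_\alpha$ and all $x\in G$, $x+S$ and $T$ are incompatible; (iv) for every $T\in\mathbb S$ the set $\{(x,S)\in G\times\mathcal T: x+S\text{ is somewhere dense in }T\}$ is at most countable. *)

(* Defs.v *)
From Stdlib Require Import ClassicalEpsilon.
From mathcomp Require Import all_boot.
Set Implicit Arguments. Unset Strict Implicit. Unset Printing Implicit Defensive.

Definition real := nat -> bool.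
Definition node := seq bool.
Definition tree := node -> bool.

Definition radd (x y : real) : real := fun n => addb (x n) (y n).
Definition rzero : real := fun _ => false.

Definition gen_group (X : real -> Prop) (z : real) : Prop :=
  exists l : seq real, (forall i, (i < size l)%N -> X (nth rzero l i)) /\ z = foldr radd rzero l.

Definition is_tree (T : tree) : Prop :=
  T [::] /\ forall s i, T s -> T (take i s).

Definition splitting (T : tree) (s : node) : bool :=
  [&& T s, T (rcons s false) & T (rcons s true)].

Definition perfect (T : tree) : Prop :=
  is_tree T /\ forall s, T s -> exists t, prefix s t /\ splitting T t.

Definition skew (T : tree) : Prop :=
  forall s t, splitting T s -> splitting T t -> size s = size t -> s = t.

Definition nsplit (T : tree) (s : node) : nat :=
  count (fun i => splitting T (take i s)) (iota 0 (size s)).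

Definition hT_prop (T : tree) (n k : nat) : Prop :=
  exists s, T s /\ size s = k /\ nsplit T s = n.

Definition hT (T : tree) (n : nat) : nat :=
  epsilon (inhabits 0%N)
    (fun k => hT_prop T n k /\ forall j, hT_prop T n j -> (k <= j)%N).

Definition le_star (g f : nat -> nat) : Prop :=
  exists N, forall n, (N <= n)%N -> (g n <= f n)%N.

(* x + T = { sigma + x|_{|sigma|} : sigma in T } *)
Definition add_restr (x : real) (s : node) : node :=
  mkseq (fun i => addb (nth false s i) (x i)) (size s).
Definition shift_tree (x : real) (T : tree) : tree :=
  fun s => T (add_restr x s).

Definition compatible (S T : tree) : Prop :=
  exists R, perfect R /\ (forall s, R s -> S s) /\ (forall s, R s -> T s).

Definition somewhere_dense (S T : tree) : Prop :=
  exists s, T s /\ forall t, T t -> (prefix t s || prefix s t) -> S t.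

Definition countable_set (U : Type) (P : U -> Prop) : Prop :=
  exists e : nat -> option U, forall u, P u -> exists n, e n = Some u.

Definition is_omega1 (A : Type) (lt : A -> A -> Prop) : Prop :=
  well_founded lt /\
  (forall a b c, lt a b -> lt b c -> lt a c) /\
  (forall a, ~ lt a a) /\
  (forall a b, lt a b \/ a = b \/ lt b a) /\
  (forall a, countable_set (fun b => lt b a)) /\
  ~ countable_set (fun _ : A => True).

Definition G_matrix (A : Type) (g : A -> nat -> nat) (G : real -> Prop)
    (Tm : A -> tree -> Prop) : Prop :=
  (forall a T, Tm a T -> perfect T /\ skew T) /\
  (forall a T, Tm a T -> le_star (g a) (hT T)) /\
  (forall a S T x, Tm a S -> Tm a T -> S <> T -> G x ->
                 ~ compatible (shift_tree x S) T) /\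
  (forall T, perfect T ->
                countable_set (fun p : real * tree =>
                  G p.1 /\ (exists a, Tm a p.2) /\ somewhere_dense (shift_tree p.1 p.2) T)).

(* ----- Cohen forcing C = ^{<omega}2, q <= p iff p is a prefix of q ----- *)
Definition cext (q p : node) : Prop := prefix p q.

(* A C-name for a subset of omega x 2, as a nice name: name k i r means
   ((k,i), r) belongs to the name. *)
Definition cname := nat -> bool -> node -> Prop.

Definition forces_bit (z : cname) (q : node) (k : nat) (i : bool) : Prop :=
  forall r, cext r q -> exists r', cext r' r /\ exists r0, cext r' r0 /\ z k i r0.

Definition forces_real (z : cname) : Prop :=
  forall k, (forall p, exists q, cext q p /\ exists i, forces_bit z q k i) /\
            (forall q, ~ (forces_bit z q k true /\ forces_bit z q k false)).

(* 1 forces zdot notin V (i.e. zdot differs from every ground model real) *)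
Definition forces_new (z : cname) : Prop :=
  forall y : real, forall p, exists q, cext q p /\ exists k, forces_bit z q k (~~ y k).

(* 1 forces zdot notin [T'] (branches of T' computed in the extension) *)
Definition forces_notin_body (z : cname) (T' : tree) : Prop :=
  forall p, exists q, cext q p /\ exists s : node, ~~ T' s /\
    forall k, (k < size s)%N -> forces_bit z q k (nth false s k).

(* Main.v *)
Require Import Defs.
From Stdlib Require Import ClassicalEpsilon FunctionalExtensionality Classical.
From mathcomp Require Import all_boot.
From mathcomp Require Import zify.
Set Implicit Arguments. Unset Strict Implicit. Unset Printing Implicit Defensive.

Definition PB (P : Prop) : bool := if excluded_middle_informative P then true else false.
Lemma PBP (P : Prop) : PB P = true <-> P.
Proof. rewrite /PB; case: excluded_middle_informative => //; split => //. Qed.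

Definition fn (z : cname) (q s : node) : Prop :=
  forall k, k < size s -> forces_bit z q k (nth false s k).

Definition Tp (z : cname) (p : node) : tree :=
  fun s => PB (exists q, cext q p /\ fn z q s).

Lemma cext_trans a b c : cext a b -> cext b c -> cext a c.
Proof. rewrite /cext => H1 H2; exact: prefix_trans H2 H1. Qed.

Lemma fb_mono z q q' k i : forces_bit z q k i -> cext q' q -> forces_bit z q' k i.
Proof. move=> H Hq r Hr; apply: H; exact: cext_trans Hr Hq. Qed.

Lemma fn_mono z q q' s : fn z q s -> cext q' q -> fn z q' s.
Proof. move=> H Hq k Hk; exact: fb_mono (H k Hk) Hq. Qed.

Lemma fb_cons z q k i j : forces_real z -> forces_bit z q k i -> forces_bit z q k j -> i = j.
Proof.
move=> Hr Hi Hj; have [_ H2] := Hr k.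
case: i j Hi Hj => [] [] // Hi Hj; exfalso; apply: (H2 q); tauto.
Qed.

Lemma extend z : forces_real z -> forall n q, exists q', cext q' q /\ exists t, size t = n /\ fn z q' t.
Proof.
move=> Hr; elim=> [|n IH] q.
  by exists q; split; [exact: prefix_refl | exists [::]; split => // k].
have [q' [Hq' [t [Ht Hf]]]] := IH q.
have [H1 _] := Hr n.
have [q'' [Hq'' [i Hi]]] := H1 q'.
exists q''; split; first exact: cext_trans Hq'' Hq'.
exists (rcons t i); split; first by rewrite size_rcons Ht.
move=> k; rewrite size_rcons ltnS leq_eqVlt => /orP [/eqP -> | Hk].
  by rewrite nth_rcons Ht ltnn eqxx.
rewrite nth_rcons Hk; exact: fb_mono (Hf k Hk) Hq''.
Qed.

Lemma extend2 z q s L : forces_real z -> fn z q s -> size s <= L ->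
  exists q', cext q' q /\ exists u, size u = L /\ fn z q' u /\ take (size s) u = s.
Proof.
move=> Hr Hs HL; have [q' [Hq' [u [Hu Hf]]]] := extend Hr L q.
exists q'; split => //; exists u; split => //; split => //.
have Hs' := fn_mono Hs Hq'.
apply: (eq_from_nth (x0 := false)); first by rewrite size_takel // Hu.
move=> i; rewrite size_takel ?Hu // => Hi.
rewrite nth_take //; apply: (fb_cons Hr (Hf i _) (Hs' i Hi)).
by rewrite Hu; exact: leq_trans Hi HL.
Qed.

Lemma firstdiff (u v : seq bool) : size u = size v -> u <> v ->
  exists m, m < size u /\ take m u = take m v /\ nth false u m <> nth false v m.
Proof.
elim: u v => [|a u IH] [|b v] //= [Hs] Hne.
case: (boolP (a == b)) => [/eqP Hab | Hab].
  subst b; have Hne' : u <> v by move=> E; apply: Hne; rewrite E.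
  have [m [Hm [Ht Hn]]] := IH v Hs Hne'.
  by exists m.+1; rewrite /= Ht; split.
by exists 0; split => //=; split => // E; rewrite E eqxx in Hab.
Qed.

Lemma Tp_take z p s i : Tp z p s -> Tp z p (take i s).
Proof.
move=> /PBP [q [Hq Hf]]; apply/PBP; exists q; split => // k Hk.
have Hki : k < i by move: Hk; rewrite size_take; case: (ltnP i (size s)) => H1 H2; lia.
have Hks : k < size s by move: Hk; rewrite size_take; case: (ltnP i (size s)) => H1 H2; lia.
rewrite nth_take //; exact: Hf.
Qed.

Lemma Tp_perfect z p : forces_real z -> forces_new z -> perfect (Tp z p).
Proof.
move=> Hr Hn; split.
  split; first by apply/PBP; exists p; split; [exact: prefix_refl | move=> k].
  move=> s i; exact: Tp_take.
move=> s /PBP [q [Hq Hfs]].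
pose y : real := fun k => epsilon (inhabits false)
   (fun b => exists q', cext q' q /\ forces_bit z q' k b).
have Hy : forall k, exists q', cext q' q /\ forces_bit z q' k (y k).
  move=> k; rewrite /y; apply: (epsilon_spec (inhabits false) (fun b => exists q', cext q' q /\ forces_bit z q' k b)).
  have [H1 _] := Hr k; have [q' [Hq' [i Hi]]] := H1 q.
  by exists i, q'.
have [q1 [Hq1 [k Hk]]] := Hn y q.
have [q2 [Hq2 Hk2]] := Hy k.
pose L := maxn (size s) k.+1.
have [qa [Hqa [u [Hu [Hfu Htu]]]]] := extend2 Hr (fn_mono Hfs Hq1) (leq_maxl (size s) k.+1).
have [qb [Hqb [v [Hv [Hfv Htv]]]]] := extend2 Hr (fn_mono Hfs Hq2) (leq_maxl (size s) k.+1).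
have HkL : k < maxn (size s) k.+1 by rewrite leq_max leqnn orbT.
have Hua : nth false u k = ~~ y k.
  have Hku : k < size u by rewrite Hu.
  exact: (fb_cons Hr (Hfu k Hku) (fb_mono Hk Hqa)).
have Hvb : nth false v k = y k.
  have Hkv : k < size v by rewrite Hv.
  exact: (fb_cons Hr (Hfv k Hkv) (fb_mono Hk2 Hqb)).
have Huv : u <> v by move=> E; rewrite E Hvb in Hua; case: (y k) Hua.
have [m [Hm [Htm Hnm]]] := firstdiff (etrans Hu (esym Hv)) Huv.
have Hsm : size s <= m.
  rewrite leqNgt; apply/negP => Hms; apply: Hnm.
  by rewrite -(nth_take false Hms u) -(nth_take false Hms v) Htu Htv.
have HuT : Tp z p u by apply/PBP; exists qa; split => //; exact: cext_trans Hqa (cext_trans Hq1 Hq).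
have HvT : Tp z p v by apply/PBP; exists qb; split => //; exact: cext_trans Hqb (cext_trans Hq2 Hq).
exists (take m u); split.
  by rewrite prefixE take_takel // Htu.
have Hmv : m < size v by rewrite Hv -Hu.
have E1 : Tp z p (rcons (take m u) (nth false u m)) by rewrite -take_nth //; exact: Tp_take.
have E2 : Tp z p (rcons (take m u) (nth false v m)) by rewrite Htm -take_nth //; exact: Tp_take.
rewrite /splitting (Tp_take m HuT) /=.
case: (nth false u m) (nth false v m) Hnm E1 E2 => [] [] // _ -> -> //.
Qed.

Lemma gen_self (X : real -> Prop) x : X x -> gen_group X x.
Proof.
move=> Hx; exists [:: x]; split; first by case.
by apply: functional_extensionality => n; rewrite /= /radd /rzero addbF.
Qed.

Theorem lemma4p4 (A : Type) (lt : A -> A -> Prop) (g : A -> nat -> nat)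
  (X : real -> Prop) (Tm : A -> tree -> Prop) (z : cname) :
  is_omega1 lt ->
  (forall a b, lt a b -> le_star (g a) (g b)) ->
  (forall f : nat -> nat, exists a, ~ le_star (g a) f) ->
  ~ countable_set X ->
  G_matrix g (gen_group X) Tm ->
  forces_real z ->
  forces_new z ->
  exists x, X x /\ forall T, (exists a, Tm a T) -> forces_notin_body z (shift_tree x T).
Proof.
move=> _ _ _ HX [_ [_ [_ Hiv]]] Hr Hn.
apply: NNPP => Hno; apply: HX.
have He := fun p => Hiv _ (Tp_perfect p Hr Hn).
pose e p := proj1_sig (constructive_indefinite_description _ (He p)).
have HeP p := proj2_sig (constructive_indefinite_description _ (He p)).
exists (fun m => match @unpickle (prod (seq bool) nat) m with
                 | Some (p, n) => omap fst (e p n) | None => None end).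
move=> x Hx.
have [T [HT HnT]] : exists T, (exists a, Tm a T) /\ ~ forces_notin_body z (shift_tree x T).
  apply: NNPP => H; apply: Hno; exists x; split => // T HT; apply: NNPP => HnT.
  by apply: H; exists T.
have [p Hp] : exists p, forall q, cext q p -> forall s, ~~ shift_tree x T s -> ~ fn z q s.
  apply: NNPP => H; apply: HnT => p; apply: NNPP => H2; apply: H; exists p => q Hq s Hs Hf.
  by apply: H2; exists q; split => //; exists s.
have Hin : gen_group X (x, T).1 /\ (exists a, Tm a (x, T).2) /\
           somewhere_dense (shift_tree (x, T).1 (x, T).2) (Tp z p).
  split; first exact: gen_self.
  split => //; exists [::]; split.
    by apply/PBP; exists p; split; [exact: prefix_refl | move=> k].
  move=> t /PBP [q [Hq Hf]] _ /=.
  case Hb: (shift_tree x T t) => //; exfalso; apply: (Hp q Hq t) => //; by rewrite Hb.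
have [n Hn'] := HeP p (x, T) Hin.
exists (pickle ((p, n) : seq bool * nat)); rewrite pickleK.
by rewrite /= /e Hn'.
Qed.
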